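(* Let $\theta\in(0,\pi)$ and let $\mathcal{B}_\theta$ be the moduli space of spherical bigons of angle $\theta$ with labeled sides, parametrized by $(K_1,K_2)\in\mathbb{R}^2$, where $K_i=\log\cot r_i$ and $r_i$ is the radius of the disk $D_i\subset\mathbb{S}^2$ whose boundary contains side $i$. Let $T_i$ be the total geodesic curvature of side $i$ (its length times $\cot r_i$). Then the matrix-valued function $$\begin{pmatrix}\frac{\partial T_1}{\partial K_1}&\frac{\partial T_1}{\partial K_2}\\[3pt]\frac{\partial T_2}{\partial K_1}&\frac{\partial T_2}{\partial K_2}\end{pmatrix}$$ on $\mathcal{B}_\theta$ is symmetric and positive definite at every point.
   Context: A spherical bigon is the intersection $D_1\cap D_2$ of two open round disks in $\mathbb{S}^2$ of radii less than $\frac{\pi}{2}$, neither containing the other, with angle the interior angle at its corners; $\mathcal{B}_\theta$ consists of such bigons of angle $\theta$ with the two sides labeled $1,2$, up to label-preserving isometry. The map $(r_1,r_2)$ is a bijection $\mathcal{B}_\theta\to(0,\frac{\pi}{2})^2$, so $(K_1,K_2)$ parametrizes $\mathcal{B}_\theta$ by $\mathbb{R}^2$. *)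

(* Defs.v *)
From Stdlib Require Import Reals.
From Coquelicot Require Import Coquelicot.
Open Scope R_scope.

(* radius: cot r = exp K, i.e. r = arctan (exp (-K)) in (0, pi/2) *)
Definition bigon_radius (K : R) : R := atan (exp (- K)).

(* spherical distance between the centers c1, c2 of D1, D2: spherical law of
   cosines in the triangle (c1, c2, p), p a corner, where the angle at p
   between the radii p->c1, p->c2 equals pi - th. *)
Definition center_dist (th K1 K2 : R) : R :=
  let r1 := bigon_radius K1 in let r2 := bigon_radius K2 in
  acos (cos r1 * cos r2 - sin r1 * sin r2 * cos th).

(* half of the central angle (at c_i) subtended by side i (the arc of
   boundary D_i lying in the closure of D_j): the angle at c_i of the
   triangle (c1, c2, p), by the spherical law of cosines. *)
Definition half_central_angle (th Ki Kj : R) : R :=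
  let ri := bigon_radius Ki in let rj := bigon_radius Kj in
  let d := center_dist th Ki Kj in
  acos ((cos rj - cos ri * cos d) / (sin ri * sin d)).

(* length of side i: arc of a circle of spherical radius r_i, central angle
   2 * phi_i, hence length 2 * phi_i * sin r_i *)
Definition side_length (th Ki Kj : R) : R :=
  2 * half_central_angle th Ki Kj * sin (bigon_radius Ki).

Definition total_curv (th Ki Kj : R) : R :=
  side_length th Ki Kj * (cos (bigon_radius Ki) / sin (bigon_radius Ki)).

Definition T1 (th K1 K2 : R) : R := total_curv th K1 K2.
Definition T2 (th K1 K2 : R) : R := total_curv th K2 K1.

Definition pos_def2 (a b c d : R) : Prop :=
  forall x y : R, (x <> 0 \/ y <> 0) ->
    0 < x * (a * x + b * y) + y * (c * x + d * y).

(* Main.v *)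
Require Import Defs.
From Stdlib Require Import Reals Lra Nsatz.
From Coquelicot Require Import Coquelicot.
Open Scope R_scope.

Definition cc K := cos (bigon_radius K).
Definition ss K := sin (bigon_radius K).

Lemma cc_pos K : 0 < cc K.
Proof. unfold cc, bigon_radius. rewrite cos_atan.
 apply Rdiv_lt_0_compat; [lra|]. apply sqrt_lt_R0. pose proof (Rle_0_sqr (exp (-K))). lra. Qed.
Lemma ss_pos K : 0 < ss K.
Proof. unfold ss, bigon_radius. rewrite sin_atan.
 apply Rdiv_lt_0_compat; [apply exp_pos|]. apply sqrt_lt_R0. pose proof (Rle_0_sqr (exp (-K))). lra. Qed.
Lemma cs1 K : cc K * cc K + ss K * ss K = 1.
Proof. unfold cc, ss. pose proof (sin2_cos2 (bigon_radius K)). unfold Rsqr in H. lra. Qed.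

Lemma atan_aux t : let Q := sqrt (1 + t²) in 0 < Q /\ Q * Q = 1 + t * (t * 1)
  /\ sin (atan t) = t / Q /\ cos (atan t) = 1 / Q.
Proof.
 intros Q. assert (h : 0 < 1 + t²) by (pose proof (Rle_0_sqr t); lra).
 repeat split.
 - apply sqrt_lt_R0; auto.
 - unfold Q. rewrite sqrt_sqrt; [unfold Rsqr; ring| lra].
 - apply sin_atan. - apply cos_atan.
Qed.

Lemma is_derive_val (f : R -> R) (x l l' : R) : is_derive f x l -> l = l' -> is_derive f x l'.
Proof. intros H ->; exact H. Qed.

Lemma d_cc K : is_derive cc K (ss K * ss K * cc K).
Proof.
 unfold cc, ss, bigon_radius.
 evar (l : R). assert (H : is_derive (fun x => cos (atan (exp (-x)))) K l).
 { auto_derive. auto. subst l. reflexivity. }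
 subst l. eapply is_derive_val; [exact H|].
 { destruct (atan_aux (exp (- K))) as (h1 & h2 & h3 & h4). rewrite h3, h4, <- h2. field. lra. }
 
Qed.
Lemma d_ss K : is_derive ss K (- (cc K * cc K * ss K)).
Proof.
 unfold cc, ss, bigon_radius.
 evar (l : R). assert (H : is_derive (fun x => sin (atan (exp (-x)))) K l).
 { auto_derive. auto. subst l. reflexivity. }
 subst l. eapply is_derive_val; [exact H|].
 { destruct (atan_aux (exp (- K))) as (h1 & h2 & h3 & h4). rewrite h3, h4, <- h2. field. lra. }

Qed.

Definition NN th i j := ss i * cc j + cc i * ss j * cos th.
Definition MM th j := ss j * sin th.
Definition XX th i j := cc i * cc j - ss i * ss j * cos th.
Definition G th i j := 2 * cc i * (PI/2 - atan (NN th i j / MM th j)).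

Lemma WX th i j : NN th i j * NN th i j + MM th j * MM th j = 1 - XX th i j * XX th i j.
Proof.
 unfold NN, MM, XX. pose proof (cs1 i). pose proof (cs1 j).
 pose proof (sin2_cos2 th). unfold Rsqr in H1. nsatz.
Qed.

Lemma closed th i j : 0 < th < PI -> total_curv th i j = G th i j.
Proof.
 intros Hth. pose proof (sin_gt_0 th (proj1 Hth) (proj2 Hth)) as Hs.
 pose proof (cc_pos i). pose proof (ss_pos i). pose proof (cc_pos j). pose proof (ss_pos j).
 assert (HM : 0 < MM th j) by (unfold MM; apply Rmult_lt_0_compat; auto).
 pose proof (WX th i j) as HW.
 assert (HW0 : 0 < NN th i j * NN th i j + MM th j * MM th j) by nra.
 set (S := sqrt (NN th i j * NN th i j + MM th j * MM th j)).
 assert (HS : 0 < S) by (apply sqrt_lt_R0; auto).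
 assert (HSS : S * S = NN th i j * NN th i j + MM th j * MM th j) by (apply sqrt_sqrt; lra).
 unfold total_curv, side_length, half_central_angle, center_dist, G.
 fold (cc i) (ss i) (cc j) (ss j).
 change (cc i * cc j - ss i * ss j * cos th) with (XX th i j).
 rewrite sin_acos by (unfold Rsqr; nra).
 unfold Rsqr. rewrite <- HW. fold S.
 rewrite cos_acos by nra.
 replace ((cc j - cc i * XX th i j) / (ss i * S)) with (cos (PI/2 - atan (NN th i j / MM th j))).
 2: { rewrite cos_shift, sin_atan.
      replace (1 + (NN th i j / MM th j)²) with ((S / MM th j) * (S / MM th j))
        by (unfold Rsqr; replace (S/MM th j*(S/MM th j)) with ((S*S)/(MM th j*MM th j)) by (field; lra);
            rewrite HSS; field; lra).
      rewrite sqrt_square by (apply Rlt_le, Rdiv_lt_0_compat; auto).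
      assert (E : cc j - cc i * XX th i j = ss i * NN th i j)
        by (unfold NN, XX; pose proof (cs1 i); nsatz).
      rewrite E. field. repeat split; lra. }
 rewrite acos_cos.
 2: { pose proof (atan_bound (NN th i j / MM th j)). lra. }
 field. lra.
Qed.

Definition WW th i j := NN th i j * NN th i j + MM th j * MM th j.
Definition aform th i j := 2 * ss i * ss i * cc i * (PI/2 - atan (NN th i j / MM th j))
  + 2 * cc i * cc i * ss i * ss j * sin th * XX th i j / WW th i j.
Definition bform th i j := -2 * sin th * ss i * ss j * cc i * cc j / WW th i j.

Lemma ex_cc x : ex_derive cc x. Proof. eexists; apply d_cc. Qed.
Lemma ex_ss x : ex_derive ss x. Proof. eexists; apply d_ss. Qed.

Lemma dG1 th i j : 0 < th < PI -> is_derive (fun x => G th x j) i (aform th i j).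
Proof.
 intros Hth. pose proof (sin_gt_0 th (proj1 Hth) (proj2 Hth)) as Hs.
 pose proof (cc_pos i). pose proof (ss_pos i). pose proof (cc_pos j). pose proof (ss_pos j).
 unfold G, aform, NN, MM. auto_derive.
 - repeat split; auto using ex_cc, ex_ss.
 - replace (Derive (fun x => cc x) i) with (ss i * ss i * cc i) by (symmetry; apply is_derive_unique, d_cc).
   replace (Derive (fun x => ss x) i) with (- (cc i * cc i * ss i)) by (symmetry; apply is_derive_unique, d_ss).
   unfold Rdiv. set (A := atan _).
   assert (HW : 0 < WW th i j) by (unfold WW, MM; pose proof (Rle_0_sqr (NN th i j)); unfold Rsqr in *;
     pose proof (Rmult_lt_0_compat _ _ H2 Hs); nra).
   unfold WW, XX, NN, MM in *.
   field_simplify_eq.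
   + pose proof (cs1 i). pose proof (cs1 j). pose proof (sin2_cos2 th). unfold Rsqr in *. nsatz.
   + repeat split; lra.
Qed.

Lemma dG2 th i j : 0 < th < PI -> is_derive (fun y => G th i y) j (bform th i j).
Proof.
 intros Hth. pose proof (sin_gt_0 th (proj1 Hth) (proj2 Hth)) as Hs.
 pose proof (cc_pos i). pose proof (ss_pos i). pose proof (cc_pos j). pose proof (ss_pos j).
 assert (HW : 0 < WW th i j) by (unfold WW, MM; pose proof (Rle_0_sqr (NN th i j)); unfold Rsqr in *;
     pose proof (Rmult_lt_0_compat _ _ H2 Hs); nra).
 unfold G, bform, NN, MM. auto_derive.
 - repeat split; auto using ex_cc, ex_ss. apply Rgt_not_eq, Rmult_lt_0_compat; auto.
 - replace (Derive (fun x => cc x) j) with (ss j * ss j * cc j) by (symmetry; apply is_derive_unique, d_cc).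
   replace (Derive (fun x => ss x) j) with (- (cc j * cc j * ss j)) by (symmetry; apply is_derive_unique, d_ss).
   unfold Rdiv. idtac.
   unfold WW, XX, NN, MM in *.
   field_simplify_eq.
   + match goal with |- _ = ?r => transitivity (r * (cc j*cc j+ss j*ss j)) end; [ring | rewrite cs1; ring].
   + repeat split; lra.
Qed.

Lemma bsym th i j : bform th i j = bform th j i.
Proof.
 unfold bform. assert (E : WW th j i = WW th i j).
 { unfold WW. rewrite WX, WX. unfold XX. ring. }
 rewrite E. unfold Rdiv. ring.
Qed.

Lemma ab_pos th i j : 0 < th < PI -> 0 < aform th i j + bform th i j.
Proof.
 intros Hth. pose proof (sin_gt_0 th (proj1 Hth) (proj2 Hth)) as Hs.
 pose proof (cc_pos i). pose proof (ss_pos i). pose proof (cc_pos j). pose proof (ss_pos j).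
 assert (HM : 0 < MM th j) by (unfold MM; apply Rmult_lt_0_compat; auto).
 assert (HW : 0 < WW th i j) by (unfold WW; pose proof (Rle_0_sqr (NN th i j)); unfold Rsqr in *; nra).
 set (q := NN th i j / MM th j).
 assert (E : aform th i j + bform th i j =
   2 * ss i * ss i * cc i * ((PI/2 - atan q) - q / (1 + q * q))).
 { unfold aform, bform. fold q.
   assert (Eq : q / (1 + q*q) = NN th i j * MM th j / WW th i j).
   { unfold q, WW. field. unfold WW in HW. split; lra. }
   rewrite Eq. unfold WW, XX, NN, MM. field_simplify_eq.
   + pose proof (cs1 i). pose proof (cs1 j). pose proof (sin2_cos2 th). unfold Rsqr in *. clear Eq. apply Rminus_diag_uniq.
     match goal with |- ?l - ?r = 0 => replace (l - r) with (2*ss i*cc i*ss j*sin th*cc j*(cc i*cc i+ss i*ss i-1)) by ring end.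
     rewrite cs1; ring.
   + unfold WW, NN, MM in HW. lra. }
 rewrite E. apply Rmult_lt_0_compat. 
 { repeat apply Rmult_lt_0_compat; lra. }
 pose proof (atan_bound q) as Hb. 
 destruct (atan_aux q) as (h1 & h2 & h3 & h4).
 set (b := atan q) in *.
 assert (Hsc : q / (1 + q*q) = sin (2 * (PI/2 - b)) / 2).
 { rewrite sin_2a, cos_shift, sin_shift, h3, h4.
   replace (1 + q*q) with (sqrt (1 + q²) * sqrt (1 + q²)) by (rewrite h2; ring). field. lra. }
 rewrite Hsc. pose proof (sin_lt_x (2 * (PI/2 - b))). lra.
Qed.

Lemma b_neg th i j : 0 < th < PI -> bform th i j < 0.
Proof.
 intros Hth. pose proof (sin_gt_0 th (proj1 Hth) (proj2 Hth)) as Hs.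
 pose proof (cc_pos i). pose proof (ss_pos i). pose proof (cc_pos j). pose proof (ss_pos j).
 assert (HM : 0 < MM th j) by (unfold MM; apply Rmult_lt_0_compat; auto).
 assert (HW : 0 < WW th i j) by (unfold WW; pose proof (Rle_0_sqr (NN th i j)); unfold Rsqr in *; nra).
 unfold bform, Rdiv.
 assert (0 < sin th * ss i * ss j * cc i * cc j * / WW th i j).
 { repeat apply Rmult_lt_0_compat; auto. apply Rinv_0_lt_compat; auto. }
 lra.
Qed.

Lemma quad (A B D x y : R) : 0 < A + B -> 0 < D + B -> B < 0 -> (x <> 0 \/ y <> 0) ->
  0 < x * (A * x + B * y) + y * (B * x + D * y).
Proof.
 intros h1 h2 h3 hxy.
 replace (x * (A * x + B * y) + y * (B * x + D * y)) with
   ((A + B) * (x * x) + (D + B) * (y * y) + (- B) * ((x - y) * (x - y))) by ring.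
 assert (0 <= (-B) * ((x - y) * (x - y))) by (apply Rmult_le_pos; [lra| apply Rle_0_sqr]).
 destruct hxy as [hx | hy].
 - assert (0 < x * x) by (apply Rsqr_pos_lt; auto).
   assert (0 <= y * y) by apply Rle_0_sqr. nra.
 - assert (0 < y * y) by (apply Rsqr_pos_lt; auto).
   assert (0 <= x * x) by apply Rle_0_sqr. nra.
Qed.

Theorem lemma3p3 (th : R) (Hth : 0 < th < PI) (K1 K2 : R) :
  exists a b c d : R,
    is_derive (fun x => T1 th x K2) K1 a /\
    is_derive (fun y => T1 th K1 y) K2 b /\
    is_derive (fun x => T2 th x K2) K1 c /\
    is_derive (fun y => T2 th K1 y) K2 d /\
    b = c /\ pos_def2 a b c d.
Proof.
 exists (aform th K1 K2), (bform th K1 K2), (bform th K2 K1), (aform th K2 K1).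
 unfold T1, T2.
 split; [|split; [|split; [|split; [|split]]]].
 - eapply is_derive_ext; [| apply (dG1 th K1 K2 Hth)]. intros; simpl; symmetry; apply closed; auto.
 - eapply is_derive_ext; [| apply (dG2 th K1 K2 Hth)]. intros; simpl; symmetry; apply closed; auto.
 - eapply is_derive_ext; [| apply (dG2 th K2 K1 Hth)]. intros; simpl; symmetry; apply closed; auto.
 - eapply is_derive_ext; [| apply (dG1 th K2 K1 Hth)]. intros; simpl; symmetry; apply closed; auto.
 - apply bsym.
 - unfold pos_def2. intros x y hxy. rewrite <- (bsym th K1 K2).
   apply quad; auto.
   + apply ab_pos; auto.
   + rewrite (bsym th K1 K2). apply ab_pos; auto.
   + apply b_neg; auto.
Qed.
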